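(* Let $K$ be a finitely generated abelian group and $S=\mathbb{K}[T_1,\dots,T_r]$ a $K$-graded polynomial ring with homogeneous variables whose grading is effective and pointed, let $I\subseteq S$ be a homogeneous ideal, and let $G:=\operatorname{Aut}_K(S)$. Then the vector subspaces $V:=\bigoplus_{w\in\Omega_S}S_w$ and $W:=\bigoplus_{u\in\Omega_I}S_u$ of $S$ are finite-dimensional, $V$ is invariant under the linear action of $G$ on $S$, and the induced representation $G\to\operatorname{GL}(V)$ is faithful.
   Context: $\mathbb{K}$ algebraically closed of characteristic zero. $\operatorname{Aut}_K(S)$ is the group of graded automorphisms $(\varphi,\psi)$ ($\varphi(S_w)=S_{\psi(w)}$, $\psi\in\operatorname{Aut}(K)$), acting on $S$ by $f\mapsto\varphi(f)$. Effective: $\omega(S)=\{w;\ S_w\ne0\}$ generates $K$; pointed: $S_0=\mathbb{K}$ and the cone generated by $\omega(S)$ in $K\otimes\mathbb{Q}$ contains no line. $w'\le w$ iff $w-w'\in\omega(S)$. $\Omega_S:=\{w\in\omega(S);\ S_w\not\subseteq S_{<w}\}$ where $S_{<w}$ is the subalgebra generated by all $S_{w'}$ with $w'<w$; for a homogeneous ideal $I$, $\Omega_I:=\{w;\ I_w\not\subseteq I_{<w}\}$ where $I_{<w}$ is the ideal generated by all $I_{w'}=I\cap S_{w'}$, $w'<w$. *)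

(* Defs.v *)
From HB Require Import structures.
From mathcomp Require Import all_boot all_order all_algebra.
From mathcomp Require Import mpoly.
Set Implicit Arguments. Unset Strict Implicit. Unset Printing Implicit Defensive.
Import GRing.Theory.
Local Open Scope ring_scope.

Section Defs.
Variables (F : closedFieldType) (K : zmodType) (r : nat) (deg : 'I_r -> K).
Local Notation S := {mpoly F[r]}.

Definition fin_gen_group : Prop :=
  exists gens : seq K, forall k : K,
    exists z : 'I_(size gens) -> int, k = \sum_(i < size gens) gens`_i *~ z i.

Definition mdegK (m : 'X_{1..r}) : K := \sum_(i < r) deg i *+ m i.

Definition homogK (w : K) (p : S) : Prop :=
  forall m, m \in msupp p -> mdegK m = w.

Definition omegaS (w : K) : Prop := exists p : S, p != 0 /\ homogK w p.

Definition leK (w' w : K) : Prop := omegaS (w - w').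
Definition ltK (w' w : K) : Prop := leK w' w /\ w' <> w.

Definition effective : Prop :=
  forall k : K, exists s : seq K, (forall x, x \in s -> omegaS x) /\
    exists z : 'I_(size s) -> int, k = \sum_(i < size s) s`_i *~ z i.

(* k is zero in K (x) Q *)
Definition torsion (k : K) : Prop := exists n : nat, (0 < n)%N /\ k *+ n = 0.

(* the image of k in K (x) Q lies in the (rational convex) cone generated
   by omega(S): d * k = sum of c_i * w_i in K (x) Q, with d > 0, c_i >= 0 *)
Definition in_cone (k : K) : Prop :=
  exists (d : nat) (s : seq (K * nat)), (0 < d)%N /\
    (forall x, x \in s -> omegaS x.1) /\
    torsion (k *+ d - \sum_(x <- s) x.1 *+ x.2).

(* pointed: S_0 = constants, and the cone contains no line *)
Definition pointed : Prop :=
  (forall p : S, homogK 0 p -> exists c : F, p = c%:MP) /\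
  (forall k : K, in_cone k -> in_cone (- k) -> torsion k).

Definition subalg_gen (A : S -> Prop) (p : S) : Prop :=
  forall B : S -> Prop,
    (forall c : F, B c%:MP) ->
    (forall q1 q2, B q1 -> B q2 -> B (q1 + q2)) ->
    (forall q1 q2, B q1 -> B q2 -> B (q1 * q2)) ->
    (forall (c : F) q, B q -> B (c *: q)) ->
    (forall q, A q -> B q) -> B p.

Definition is_ideal (J : S -> Prop) : Prop :=
  [/\ J 0, (forall q1 q2, J q1 -> J q2 -> J (q1 + q2)) &
      (forall a q, J q -> J (a * q))].

Definition ideal_gen (A : S -> Prop) (p : S) : Prop :=
  forall J : S -> Prop, is_ideal J -> (forall q, A q -> J q) -> J p.

Definition hcomp (w : K) (p : S) : S :=
  \sum_(m <- msupp p | mdegK m == w) p@_m *: 'X_[m].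

Definition homog_ideal (I : S -> Prop) : Prop :=
  is_ideal I /\ forall p w, I p -> I (hcomp w p).

Definition S_lt (w : K) : S -> Prop :=
  subalg_gen (fun q => exists w', ltK w' w /\ homogK w' q).

Definition OmegaS (w : K) : Prop :=
  omegaS w /\ exists p, homogK w p /\ ~ S_lt w p.

Definition I_lt (I : S -> Prop) (w : K) : S -> Prop :=
  ideal_gen (fun q => I q /\ exists w', ltK w' w /\ homogK w' q).

Definition OmegaI (I : S -> Prop) (w : K) : Prop :=
  exists p, I p /\ homogK w p /\ ~ I_lt I w p.

Definition dsum (P : K -> Prop) (p : S) : Prop :=
  exists s : seq (K * S), (forall x, x \in s -> P x.1 /\ homogK x.1 x.2) /\
    p = \sum_(x <- s) x.2.

Definition fin_dim (P : S -> Prop) : Prop :=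
  exists s : seq S, forall p, P p ->
    exists c : 'I_(size s) -> F, p = \sum_(i < size s) c i *: s`_i.

Definition graded_aut (phi : S -> S) (psi : K -> K) : Prop :=
  (forall p q, phi (p + q) = phi p + phi q) /\
  (forall p q, phi (p * q) = phi p * phi q) /\
  phi 1 = 1 /\
  (forall (c : F) p, phi (c *: p) = c *: phi p) /\
  bijective phi /\
  (forall a b, psi (a + b) = psi a + psi b) /\
  bijective psi /\
  (forall w : K, (forall p, homogK w p -> homogK (psi w) (phi p)) /\
     (forall q, homogK (psi w) q -> exists p, homogK w p /\ phi p = q)).

End Defs.

(* Main.v *)
From HB Require Import structures.
From mathcomp Require Import all_boot all_order all_algebra.
From mathcomp Require Import mpoly.
Require Import Defs.
From Stdlib Require Import Classical IndefiniteDescription.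
Import GRing.Theory.
Import Order.TTheory GRing.Theory.
Lemma nat_min_from (f : nat -> nat) (n : nat) :
  exists k, n <= k /\ forall j, n <= j -> f k <= f j.
Proof.
suff H : forall v, forall j, n <= j -> f j = v ->
  exists k, n <= k /\ forall j, n <= j -> f k <= f j by exact: (H _ n (leqnn n) erefl).
elim/ltn_ind=> v IH j hj hv.
destruct (classic (exists j', n <= j' /\ f j' < v)) as [[j' [h1 h2]]|hn].
  exact: (IH (f j') h2 j' h1 erefl).
exists j; split=> // j' hj'; rewrite hv leqNgt; apply/negP=> h; apply: hn; by exists j'.
Qed.

Lemma nat_monosub (f : nat -> nat) :
  exists s : nat -> nat, (forall i, s i < s i.+1) /\ (forall i, f (s i) <= f (s i.+1)).
Proof.
have [g Hg] : exists g : nat -> nat, forall n, n <= g n /\ forall j, n <= j -> f (g n) <= f j.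
  exists (fun n => proj1_sig (constructive_indefinite_description _ (nat_min_from f n))).
  by move=> n; case: (constructive_indefinite_description _ _).
pose s := fix s i := match i with 0 => g 0 | i'.+1 => g (s i').+1 end.
exists s; split=> i.
  by case: (Hg (s i).+1).
have [n [hn Hn]] : exists n, n <= s i /\ forall j, n <= j -> f (s i) <= f j.
  case: i => [|i] /=; [exists 0|exists (s i).+1]; exact: Hg.
apply: Hn; apply: (leq_trans hn); apply: ltnW; by case: (Hg (s i).+1).
Qed.

Section Dickson.
Variable r : nat.
Local Notation M := ('X_{1..r}).

Lemma dickson_coords (k : nat) (f : nat -> M) :
  exists s : nat -> nat, (forall i, s i < s i.+1) /\
    forall j : 'I_r, j < k -> forall i, f (s i) j <= f (s i.+1) j.
Proof.
elim: k => [|k [s [hs hm]]].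
  by exists id; split.
case: (ltnP k r) => hk; last first.
  exists s; split=> // j hj; apply: hm; apply: (leq_trans (ltn_ord j)) ; exact: hk.
pose jk := Ordinal hk.
have [t [ht htm]] := nat_monosub (fun i => f (s i) jk).
exists (fun i => s (t i)); split.
  move=> i; apply: (homo_ltn (f:=s) (r:=fun a b => a < b)) => //; exact: ltn_trans.
move=> j; rewrite ltnS leq_eqVlt => /orP [/eqP ej|hj] i.
  have -> : j = jk by apply: val_inj.
  exact: htm.
apply: (homo_leq (f := fun i => f (s i) j) (r:=leq)) => //.
- exact: leq_trans.
- exact: hm.
- exact: ltnW.
Qed.

Lemma dickson_wqo (f : nat -> M) : exists i j, i < j /\ (f i <= f j)%MM.
Proof.
have [s [hs hm]] := dickson_coords r f.
exists (s 0), (s 1); split=> //; apply/mnm_lepP=> j; exact: hm.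
Qed.

Fixpoint build (h : seq M -> M) k : seq M :=
  match k with 0 => [::] | k'.+1 => rcons (build h k') (h (build h k')) end.

Lemma dickson_basis (P : M -> Prop) :
  exists s : seq M, (forall b, b \in s -> P b) /\
    forall m, P m -> exists2 b, b \in s & (b <= m)%MM.
Proof.
apply: NNPP => hno.
have H1 : forall s : seq M, exists m : M, (forall b, b \in s -> P b) ->
    P m /\ forall b, b \in s -> ~ (b <= m)%MM.
  move=> s; destruct (classic (forall b, b \in s -> P b)) as [hs|hs]; last first.
    by exists 0%MM.
  apply: NNPP => hn; apply: hno; exists s; split=> // m pm.
  apply: NNPP => hb; apply: hn; exists m => _; split=> // b bs hbm; apply: hb; by exists b.
pose h := fun s => proj1_sig (constructive_indefinite_description _ (H1 s)).
have Hh : forall s, (forall b, b \in s -> P b) -> P (h s) /\ forall b, b \in s -> ~ (b <= h s)%MM.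
  by move=> s; rewrite /h; case: (constructive_indefinite_description _ _).
have Hb : forall k, (forall b, b \in build h k -> P b).
  elim=> [|k IH] b //=; rewrite mem_rcons inE => /orP [/eqP ->|]; last exact: IH.
  by case: (Hh _ IH).
have Hm : forall i j, i < j -> h (build h i) \in build h j.
  move=> i; elim=> [|j IH] //; rewrite ltnS leq_eqVlt => /orP [/eqP ->|hij] /=;
    rewrite mem_rcons inE ?eqxx //.
  by rewrite IH ?orbT.
have [i [j [hij hle]]] := dickson_wqo (fun k => h (build h k)).
have [_ ] := Hh _ (Hb j); move/(_ _ (Hm _ _ hij)); by apply.
Qed.
End Dickson.
Local Open Scope ring_scope.

Section Main.
Variables (F : closedFieldType) (K : zmodType) (r : nat) (deg : 'I_r -> K).
Local Notation S := {mpoly F[r]}.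
Local Notation mdegK := (mdegK deg).
Local Notation homogK := (@Defs.homogK F K r deg).

Definition lin (s : seq S) (p : S) :=
  exists c : 'I_(size s) -> F, p = \sum_(i < size s) c i *: s`_i.

Lemma lin0 s : lin s 0.
Proof. exists (fun _ => 0); by rewrite big1 // => i _; rewrite scale0r. Qed.

Lemma linD s p q : lin s p -> lin s q -> lin s (p + q).
Proof.
move=> [c1 ->] [c2 ->]; exists (fun i => c1 i + c2 i).
by rewrite -big_split /=; apply: eq_bigr => i _; rewrite scalerDl.
Qed.

Lemma linZ s a p : lin s p -> lin s (a *: p).
Proof.
move=> [c ->]; exists (fun i => a * c i).
by rewrite scaler_sumr; apply: eq_bigr => i _; rewrite scalerA.
Qed.

Lemma linE s k : (k < size s)%N -> lin s s`_k.
Proof.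
move=> hk; exists (fun i => ((i : nat) == k)%:R).
rewrite (bigD1 (Ordinal hk)) //= eqxx scale1r big1 ?addr0 // => i hi.
have -> : ((i : nat) == k) = false.
  by apply/negbTE; apply: contra hi => /eqP e; apply/eqP/val_inj.
by rewrite scale0r.
Qed.

Lemma lin_sum s (T : eqType) (l : seq T) (f : T -> S) :
  (forall x, x \in l -> lin s (f x)) -> lin s (\sum_(x <- l) f x).
Proof.
elim: l => [|x l IH] H; first by rewrite big_nil; apply: lin0.
rewrite big_cons; apply: linD; first by apply: H; rewrite mem_head.
by apply: IH => y hy; apply: H; rewrite inE hy orbT.
Qed.

Lemma lin_fin_dim (s : seq S) (P : S -> Prop) :
  (forall p, P p -> lin s p) -> fin_dim (F:=F) P.
Proof. by move=> H; exists s. Qed.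

Lemma mdegK0 : mdegK 0%MM = 0.
Proof. by rewrite /Defs.mdegK big1 // => i _; rewrite mnm0E mulr0n. Qed.

Lemma mdegKD m1 m2 : mdegK (m1 + m2)%MM = mdegK m1 + mdegK m2.
Proof.
rewrite /Defs.mdegK -big_split /=; apply: eq_bigr => i _.
by rewrite mnmDE mulrnDr.
Qed.

Lemma homogX m : homogK (mdegK m) 'X_[m].
Proof. by move=> m'; rewrite msuppX inE => /eqP ->. Qed.

Lemma mpolyX_neq0 m : 'X_[m] != 0 :> S.
Proof.
apply/negP => /eqP h; have := mcoeffX (n:=r) F m m; rewrite h mcoeff0 eqxx.
by move/eqP; rewrite eq_sym oner_eq0.
Qed.

Lemma X_const_eq0 m (c : F) : 'X_[m] = c%:MP :> S -> m = 0%MM.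
Proof.
move=> h; have := mcoeffX (n:=r) F m m; rewrite h mcoeffC eqxx.
case: eqP => // _; rewrite mulr0 => /eqP; by rewrite eq_sym oner_eq0.
Qed.

Hypothesis pt1 : forall p : S, homogK 0 p -> exists c : F, p = c%:MP.

Lemma fin_monos u : exists ms : seq 'X_{1..r}, forall m, mdegK m = u -> m \in ms.
Proof.
have [s [hs hb]] := @dickson_basis r (fun m : 'X_{1..r} => mdegK m = u).
exists s => m hm; have [b bs hbm] := hb m hm.
have e : m = (b + (m - b))%MM by rewrite addmC submK.
have h0 : mdegK (m - b)%MM = 0.
  have := congr1 mdegK e; rewrite mdegKD hm (hs _ bs) => /eqP.
  by rewrite -subr_eq0 opprD addrA subrr sub0r oppr_eq0 => /eqP.
have hX := homogX (m - b)%MM; rewrite h0 in hX.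
have [c hc] := pt1 _ hX.
by rewrite e (X_const_eq0 _ _ hc) addm0.
Qed.

Lemma fin_dim_dsum (P : K -> Prop) (L : seq K) :
  (forall w, P w -> w \in L) -> fin_dim (F:=F) (dsum (F:=F) deg P).
Proof.
move=> HL.
have [g Hg] : exists g : K -> seq 'X_{1..r}, forall u m, mdegK m = u -> m \in g u.
  exists (fun u => proj1_sig (constructive_indefinite_description _ (fin_monos u))).
  by move=> u; case: (constructive_indefinite_description _ _).
pose ms := flatten (map g L).
apply: (@lin_fin_dim (map (fun m => 'X_[m]) ms)) => p [s [hs ->]].
apply: lin_sum => x hx; have [Px hx2] := hs x hx.
rewrite (mpolyE x.2); apply: lin_sum => m hm; apply: linZ.
have hmL : m \in ms.
  apply/flattenP; exists (g x.1); first by apply: map_f; apply: HL.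
  by apply: Hg; apply: hx2.
have := @linE (map (fun m => 'X_[m]) ms) (index m ms).
rewrite size_map index_mem (nth_map 0%MM) ?index_mem // nth_index //.
by apply.
Qed.
End Main.
Section Main2.
Variables (F : closedFieldType) (K : zmodType) (r : nat) (deg : 'I_r -> K).
Local Notation S := {mpoly F[r]}.
Local Notation mdegK := (mdegK deg).
Local Notation homogK := (@Defs.homogK F K r deg).

Section SG.
Variable A : S -> Prop.
Local Notation SG := (subalg_gen A).
Lemma sgC c : SG c%:MP. Proof. by move=> B h1 h2 h3 h4 h5; apply: h1. Qed.
Lemma sg0 : SG 0. Proof. by rewrite -(mpolyC0 r F); apply: sgC. Qed.
Lemma sgD p q : SG p -> SG q -> SG (p + q).
Proof. move=> hp hq B h1 h2 h3 h4 h5; exact: h2 (hp B h1 h2 h3 h4 h5) (hq B h1 h2 h3 h4 h5). Qed.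
Lemma sgM p q : SG p -> SG q -> SG (p * q).
Proof. move=> hp hq B h1 h2 h3 h4 h5; exact: h3 (hp B h1 h2 h3 h4 h5) (hq B h1 h2 h3 h4 h5). Qed.
Lemma sgZ c p : SG p -> SG (c *: p).
Proof. move=> hp B h1 h2 h3 h4 h5; exact: h4 (hp B h1 h2 h3 h4 h5). Qed.
Lemma sgA p : A p -> SG p.
Proof. by move=> hp B h1 h2 h3 h4 h5; apply: h5. Qed.
Lemma sg_sum (T : eqType) (l : seq T) (f : T -> S) :
  (forall x, x \in l -> SG (f x)) -> SG (\sum_(x <- l) f x).
Proof.
elim: l => [|x l IH] H; first by rewrite big_nil; apply: sg0.
rewrite big_cons; apply: sgD; first by apply: H; rewrite mem_head.
by apply: IH => y hy; apply: H; rewrite inE hy orbT.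
Qed.
End SG.

Lemma mdegKU i : mdegK U_(i)%MM = deg i.
Proof.
rewrite /Defs.mdegK (bigD1 i) //= mnm1E eqxx mulr1n big1 ?addr0 // => j hj.
rewrite mnm1E; have -> : (i == j) = false by rewrite eq_sym; apply/negbTE.
by rewrite mulr0n.
Qed.

Lemma coefU i (q : S) : q@_U_(i) = (q^`M(i))@_0%MM.
Proof. by rewrite mcoeff_deriv add0m mnm0E mulr1n. Qed.

Lemma homog_coef0 w (q : S) m : homogK w q -> mdegK m != w -> q@_m = 0.
Proof.
move=> hq hm; apply/eqP; rewrite mcoeff_eq0; apply/negP => /hq e.
by rewrite e eqxx in hm.
Qed.

Lemma X_notin_Slt i : ~ S_lt (F:=F) deg (deg i) 'X_i.
Proof.
move=> H.
have : ('X_i : S)@_U_(i) = 0.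
  apply: (H (fun q : S => q@_U_(i) = 0)).
  - by move=> c; rewrite mcoeffC mnm1_eq0 mulr0.
  - by move=> q1 q2 h1 h2; rewrite mcoeffD h1 h2 addr0.
  - move=> q1 q2 h1 h2; rewrite coefU mderivM mcoeffD.
    rewrite !(fst (mcoeff0_is_multiplicative r F)) -!coefU h1 h2.
    by rewrite mul0r mulr0 addr0.
  - by move=> c q h; rewrite mcoeffZ h mulr0.
  - move=> q [w' [[_ hne] hq]]; apply: homog_coef0 hq _.
    by rewrite mdegKU; apply/eqP => e; apply: hne.
by rewrite mcoeffXU eqxx => /eqP; rewrite oner_eq0.
Qed.

Lemma X_OmegaS i : OmegaS F deg (deg i).
Proof.
split; first by exists 'X_i; split; [apply: mpolyX_neq0 | rewrite -{1}mdegKU; apply: homogX].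
exists 'X_i; split; last exact: X_notin_Slt.
by rewrite -{1}mdegKU; apply: homogX.
Qed.

Hypothesis pt1 : forall p : S, homogK 0 p -> exists c : F, p = c%:MP.

Lemma OmegaS_deg w : OmegaS F deg w -> exists i, deg i = w.
Proof.
move=> [_ [p [hp hn]]]; apply: NNPP => hno; apply: hn.
have hw : forall j, deg j != w by move=> j; apply/eqP => e; apply: hno; exists j.
rewrite (mpolyE p); apply: sg_sum => m hm; apply: sgZ.
have hmd := hp m hm.
have [->|] := eqVneq m 0%MM.
  by rewrite mpolyX0 -(mpolyC1 r F); apply: sgC.
move=> mn0.
have [j hj] : exists j, m j != 0%N.
  apply: NNPP => hj; apply: (negP mn0); apply/eqP/mnmP => k; rewrite mnm0E.
  by apply/eqP; apply/negPn/negP => hk; apply: hj; exists k.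
have hU : (U_(j) <= m)%MM by rewrite lep1mP.
set m' := (m - U_(j))%MM.
have em : m = (U_(j) + m')%MM by rewrite /m' addmC submK.
have hd' : mdegK m' = w - deg j.
  by rewrite -hmd em mdegKD mdegKU addrC addKr.
rewrite em mpolyXD; apply: sgM; apply: sgA.
- exists (deg j); split; last by rewrite -{1}mdegKU; apply: homogX.
  split; last by apply/eqP; apply: hw.
  by exists 'X_[m']; split; [apply: mpolyX_neq0| rewrite -hd'; apply: homogX].
- exists (mdegK m'); split; last exact: homogX.
  split.
    exists 'X_j; split; first exact: mpolyX_neq0.
    by rewrite hd' opprB addrC subrK -{1}mdegKU; apply: homogX.
  rewrite hd' => /eqP; rewrite -subr_eq0 addrAC subrr add0r oppr_eq0 => /eqP dj.
  have hX := @homogX F K r deg U_(j)%MM; rewrite mdegKU dj in hX.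
  have [c hc] := pt1 _ hX.
  by have := @X_const_eq0 F r _ _ hc; apply/eqP; rewrite mnm1_eq0.
Qed.
End Main2.
Section Main3.
Variables (F : closedFieldType) (K : zmodType) (r : nat) (deg : 'I_r -> K).
Local Notation S := {mpoly F[r]}.
Local Notation mdegK := (mdegK deg).
Local Notation homogK := (@Defs.homogK F K r deg).

Lemma homog0 w : homogK w 0.
Proof. by move=> m; rewrite -mpolyC0 msupp0. Qed.

Lemma homogD w p q : homogK w p -> homogK w q -> homogK w (p + q).
Proof. move=> hp hq m /msuppD_le; rewrite mem_cat => /orP [/hp|/hq] //. Qed.

Lemma homogZ w c p : homogK w p -> homogK w (c *: p).
Proof. by move=> hp m /msuppZ_le /hp. Qed.

Lemma homogN w p : homogK w p -> homogK w (- p).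
Proof. by move=> hp m; rewrite (perm_mem (msuppN p)) => /hp. Qed.

Lemma homogM w1 w2 p q : homogK w1 p -> homogK w2 q -> homogK (w1 + w2) (p * q).
Proof.
move=> hp hq m /msuppM_le /allpairsP [[m1 m2] [/= h1 h2 ->]].
by rewrite mdegKD (hp _ h1) (hq _ h2).
Qed.

Lemma homog_sum (T : eqType) w (l : seq T) (f : T -> S) :
  (forall x, x \in l -> homogK w (f x)) -> homogK w (\sum_(x <- l) f x).
Proof.
elim: l => [|x l IH] H; first by rewrite big_nil; apply: homog0.
rewrite big_cons; apply: homogD; first by apply: H; rewrite mem_head.
by apply: IH => y hy; apply: H; rewrite inE hy orbT.
Qed.

Lemma homog_nz_deg w p : p != 0 -> homogK w p -> mdegK (mlead p) = w.
Proof. by move=> nz hp; apply: hp; apply: mlead_supp. Qed.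

Section IG.
Variable A : S -> Prop.
Lemma ig_ideal : is_ideal (ideal_gen A).
Proof.
split.
- by move=> J [h0 _ _] _.
- move=> q1 q2 h1 h2 J hJ hA; have [_ hD _] := hJ; apply: hD; [exact: h1|exact: h2].
- move=> a q h J hJ hA; have [_ _ hM] := hJ; apply: hM; exact: h.
Qed.
Lemma igA q : A q -> ideal_gen A q.
Proof. by move=> h J _ hA; apply: hA. Qed.
End IG.

Lemma idealN (J : S -> Prop) q : is_ideal J -> J q -> J (- q).
Proof. by move=> [_ _ hM] h; rewrite -mulN1r; apply: hM. Qed.
Lemma idealD (J : S -> Prop) q1 q2 : is_ideal J -> J q1 -> J q2 -> J (q1 + q2).
Proof. by move=> [_ hD _]; apply: hD. Qed.
Lemma idealM (J : S -> Prop) a q : is_ideal J -> J q -> J (a * q).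
Proof. by move=> [_ _ hM]; apply: hM. Qed.
Lemma ideal0 (J : S -> Prop) : is_ideal J -> J 0.
Proof. by case. Qed.

Variable I : S -> Prop.
Hypothesis hI : homog_ideal deg I.

Lemma OmegaI_fin : exists L : seq K, forall u, OmegaI deg I u -> u \in L.
Proof.
have [hId _] := hI.
pose P := fun m => exists g : S, [/\ I g, g != 0, homogK (mdegK m) g & mlead g = m].
have [s [hs hb]] := @dickson_basis r P.
exists (map mdegK s) => u [f0 [If0 [hf0 hn]]].
apply: NNPP => hu; apply: hn; move: f0 If0 hf0.
elim/mleadrect => f IH If hf.
have [->|fn0] := eqVneq f 0; first by apply: ideal0; apply: ig_ideal.
set m := mlead f.
have hmu : mdegK m = u by apply: homog_nz_deg.
have Pm : P m by exists f; split=> //; rewrite hmu.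
have [b bs hbm] := hb m Pm.
have [g [Ig gn0 hg gb]] := hs b bs.
set m' := (m - b)%MM.
have em : m = (m' + b)%MM by rewrite /m' submK.
pose c := mleadc f / mleadc g.
pose h := (c *: 'X_[m']) * g.
have hdeg : mdegK m' + mdegK b = u by rewrite -mdegKD -em.
have gcn0 : mleadc g != 0 by rewrite mleadc_eq0.
have eX : mlead ('X_[m'] : S) = m' by exact: mleadXm.
have lhX : mlead ('X_[m'] * g) = m.
  rewrite mleadM_proper eX ?gb //.
  by rewrite mcoeffX eqxx mul1r -gb.
have hcoef : h@_m = mleadc f.
  have e2 : (m' + b)%MM = (mlead ('X_[m'] : S) + mlead g)%MM by rewrite eX gb.
  have e3 : ('X_[m'] * g)@_m = mleadc g.
    by rewrite em e2 mleadcM eX mcoeffX eqxx mul1r.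
  by rewrite /h -scalerAl mcoeffZ e3 /c divfK.
have Ih : I h by apply: idealM.
have hh : homogK u h.
  by rewrite -hdeg; apply: homogM => //; apply: homogZ; apply: homogX.
have If' : I (f - h) by apply: idealD => //; apply: idealN.
have hf' : homogK u (f - h) by apply: homogD => //; apply: homogN.
have Hf' : ideal_gen (fun q => I q /\ exists w', ltK F deg w' u /\ homogK w' q) (f - h).
  have [->|f'n0] := eqVneq (f - h) 0; first by apply: ideal0; apply: ig_ideal.
  apply: (IH (f - h)) => //.
  have hle : (mlead (f - h) <= m)%O.
    apply: le_trans (mleadB_le _ _) _; rewrite leUx lexx /=.
    rewrite /h -scalerAl; apply: le_trans (mleadZ_le _ _) _; by rewrite lhX.
  rewrite lt_neqAle hle andbT; apply/eqP => e.
  move: f'n0; rewrite -mleadc_eq0 e mcoeffB hcoef subrr eqxx //.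
have -> : f = (f - h) + h by rewrite subrK.
rewrite /I_lt; apply: (@idealD (ideal_gen _) _ _ (ig_ideal _)) => //.
rewrite /h; apply: (@idealM (ideal_gen _) _ _ (ig_ideal _)).
apply: igA; split=> //; exists (mdegK b); split=> //.
split.
  exists 'X_[m']; split; first exact: mpolyX_neq0.
  by rewrite -hdeg addrK; apply: homogX.
move=> e; apply: hu; rewrite -e; exact: map_f.
Qed.
End Main3.
Section Main4.
Variables (F : closedFieldType) (K : zmodType) (r : nat) (deg : 'I_r -> K).
Local Notation S := {mpoly F[r]}.
Local Notation mdegK := (mdegK deg).
Local Notation homogK := (@Defs.homogK F K r deg).

Variables (phi : S -> S) (psi : K -> K).
Hypothesis hg : graded_aut deg phi psi.

Lemma phi_add p q : phi (p + q) = phi p + phi q. Proof. by case: hg. Qed.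
Lemma phi_mul p q : phi (p * q) = phi p * phi q. Proof. by case: hg => _ []. Qed.
Lemma phi1 : phi 1 = 1. Proof. by case: hg => _ [_ []]. Qed.
Lemma phiZ c p : phi (c *: p) = c *: phi p. Proof. by case: hg => _ [_ [_ []]]. Qed.
Lemma phi_bij : bijective phi. Proof. by case: hg => _ [_ [_ [_ []]]]. Qed.
Lemma psi_add a b : psi (a + b) = psi a + psi b. Proof. by case: hg => _ [_ [_ [_ [_ []]]]]. Qed.
Lemma psi_bij : bijective psi. Proof. by case: hg => _ [_ [_ [_ [_ [_ []]]]]]. Qed.
Lemma phi_hom w : (forall p, homogK w p -> homogK (psi w) (phi p)) /\
     (forall q, homogK (psi w) q -> exists p, homogK w p /\ phi p = q).
Proof. by case: hg => _ [_ [_ [_ [_ [_ [_ ]]]]]]. Qed.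

Lemma phi0 : phi 0 = 0.
Proof. have e := phi_add 0 0; rewrite addr0 in e; apply: (addrI (phi 0)); by rewrite -e addr0. Qed.
Lemma psi0 : psi 0 = 0.
Proof. have e := psi_add 0 0; rewrite addr0 in e; apply: (addrI (psi 0)); by rewrite -e addr0. Qed.
Lemma psiB a b : psi (a - b) = psi a - psi b.
Proof. by apply: (addIr (psi b)); rewrite -psi_add !subrK. Qed.
Lemma psiN a : psi (- a) = - psi a.
Proof. by rewrite -sub0r psiB psi0 sub0r. Qed.
Lemma psiMn a n : psi (a *+ n) = psi a *+ n.
Proof. by elim: n => [|n IH]; rewrite ?mulr0n ?psi0 // !mulrS psi_add IH. Qed.
Lemma psiMz a z : psi (a *~ z) = psi a *~ z.
Proof.
case: z => n; first by rewrite -!pmulrn psiMn.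
by rewrite NegzE !mulrNz psiN -!pmulrn psiMn.
Qed.
Lemma psi_sum (T : Type) (l : seq T) (f : T -> K) :
  psi (\sum_(x <- l) f x) = \sum_(x <- l) psi (f x).
Proof. elim: l => [|x l IH]; rewrite ?big_nil ?psi0 // !big_cons psi_add IH //. Qed.
Lemma phi_sum (T : Type) (l : seq T) (f : T -> S) :
  phi (\sum_(x <- l) f x) = \sum_(x <- l) phi (f x).
Proof. elim: l => [|x l IH]; rewrite ?big_nil ?phi0 // !big_cons phi_add IH //. Qed.
Lemma phi_prod (T : Type) (l : seq T) (f : T -> S) :
  phi (\prod_(x <- l) f x) = \prod_(x <- l) phi (f x).
Proof. elim: l => [|x l IH]; rewrite ?big_nil ?phi1 // !big_cons phi_mul IH //. Qed.
Lemma phiX p n : phi (p ^+ n) = phi p ^+ n.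
Proof. by elim: n => [|n IH]; rewrite ?expr0 ?phi1 // !exprS phi_mul IH. Qed.
Lemma phiC c : phi c%:MP = c%:MP.
Proof. by rewrite -[c%:MP]mulr1 mul_mpolyC phiZ phi1 -mul_mpolyC mulr1. Qed.

Lemma phi_nz p : p != 0 -> phi p != 0.
Proof.
move=> nz; apply/negP => /eqP e; move: nz; rewrite -phi0 in e.
by rewrite (bij_inj phi_bij e) eqxx.
Qed.

Lemma omega_psi w : omegaS F deg w -> omegaS F deg (psi w).
Proof.
move=> [p [nz hp]]; exists (phi p); split; first exact: phi_nz.
by apply: (phi_hom w).1.
Qed.

Lemma omega_psi_inv w : omegaS F deg (psi w) -> omegaS F deg w.
Proof.
move=> [q [nz hq]]; have [p [hp e]] := (phi_hom w).2 q hq.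
exists p; split=> //; apply/negP => /eqP p0; move: nz; by rewrite -e p0 phi0 eqxx.
Qed.

Lemma OmegaS_psi w : OmegaS F deg w -> OmegaS F deg (psi w).
Proof.
move=> [ho [p0 [hp0 hn]]]; split; first exact: omega_psi.
exists (phi p0); split; first exact: (phi_hom w).1.
move=> H; apply: hn.
have [g phig gphi] := phi_bij.
have gadd : forall q1 q2, g (q1 + q2) = g q1 + g q2.
  by move=> q1 q2; apply: (bij_inj phi_bij); rewrite phi_add !gphi.
have gmul : forall q1 q2, g (q1 * q2) = g q1 * g q2.
  by move=> q1 q2; apply: (bij_inj phi_bij); rewrite phi_mul !gphi.
have gZ : forall c q, g (c *: q) = c *: g q.
  by move=> c q; apply: (bij_inj phi_bij); rewrite phiZ !gphi.
have gC : forall c, g c%:MP = c%:MP by move=> c; apply: (bij_inj phi_bij); rewrite phiC gphi.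
rewrite -(phig p0).
apply: (H (fun q => S_lt (F:=F) deg w (g q))).
- by move=> c; rewrite gC; apply: sgC.
- by move=> q1 q2 h1 h2; rewrite gadd; apply: sgD.
- by move=> q1 q2 h1 h2; rewrite gmul; apply: sgM.
- by move=> c q h; rewrite gZ; apply: sgZ.
move=> q [w' [[hle hne] hq]].
have [pinv ppsi psip] := psi_bij.
have hq' : homogK (psi (pinv w')) q by rewrite psip.
have [p [hp ep]] := (phi_hom (pinv w')).2 q hq'.
apply: sgA; exists (pinv w'); split; last by rewrite -ep phig.
split.
  apply: omega_psi_inv; rewrite psiB psip; exact: hle.
by move=> e; apply: hne; rewrite -e psip.
Qed.

Lemma V_inv p : dsum deg (OmegaS F deg) p -> dsum deg (OmegaS F deg) (phi p).
Proof.
move=> [s [hs ->]]; exists (map (fun x => (psi x.1, phi x.2)) s); split.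
  move=> y /mapP [x xs ->] /=; have [h1 h2] := hs x xs; split.
    exact: OmegaS_psi.
  exact: (phi_hom x.1).1.
by rewrite phi_sum big_map.
Qed.

Hypothesis fixV : forall p, dsum deg (OmegaS F deg) p -> phi p = p.

Lemma phiXi i : phi 'X_i = 'X_i.
Proof.
apply: fixV; exists [:: (deg i, 'X_i)]; split; last by rewrite big_seq1.
move=> x; rewrite inE => /eqP -> /=; split; first exact: X_OmegaS.
by rewrite -{1}mdegKU; apply: homogX.
Qed.

Lemma phi_id p : phi p = p.
Proof.
have -> : phi p = \sum_(m <- msupp p) phi (p@_m *: 'X_[m]) by rewrite {1}(mpolyE p) phi_sum.
rewrite [RHS]mpolyE; apply: eq_bigr => m _.
rewrite phiZ mpolyXE_id phi_prod; congr (_ *: _); apply: eq_bigr => i _.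
by rewrite phiX phiXi.
Qed.

Lemma psi_id_omega w : omegaS F deg w -> psi w = w.
Proof.
move=> [p [nz hp]]; have hp' := (phi_hom w).1 p hp; rewrite phi_id in hp'.
by rewrite -(hp' _ (mlead_supp nz)) (hp _ (mlead_supp nz)).
Qed.

Hypothesis eff : effective F deg.

Lemma psi_id k : psi k = k.
Proof.
have [s [hs [z ->]]] := eff k; rewrite psi_sum; apply: eq_bigr => i _.
by rewrite psiMz psi_id_omega //; apply: hs; apply: mem_nth.
Qed.
End Main4.
Theorem mainTheorem5 (F : closedFieldType) (K : zmodType) (r : nat)
    (deg : 'I_r -> K) (I : {mpoly F[r]} -> Prop) :
  [pchar F] =i pred0 ->
  fin_gen_group K ->
  effective F deg ->
  pointed F deg ->
  homog_ideal deg I ->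
  let V := dsum (F:=F) deg (OmegaS F deg) in
  let W := dsum (F:=F) deg (OmegaI deg I) in
  [/\ fin_dim (F:=F) V, fin_dim (F:=F) W,
      (forall phi psi, graded_aut deg phi psi -> forall p, V p -> V (phi p)) &
      (forall phi psi, graded_aut deg phi psi ->
         (forall p, V p -> phi p = p) ->
         (forall p, phi p = p) /\ (forall k, psi k = k))].
Proof.
move=> _ _ heff [pt1 _] hI V W; split.
- apply: (@fin_dim_dsum F K r deg pt1 _ (map deg (enum 'I_r))) => w /(@OmegaS_deg F K r deg pt1) [i <-].
  by apply: map_f; rewrite mem_enum.
- have [L HL] := @OmegaI_fin F K r deg I hI.
  exact: (@fin_dim_dsum F K r deg pt1 _ L).
- by move=> phi psi hg p; exact: (@V_inv F K r deg phi psi hg).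
- move=> phi psi hg fixV; split=> [p|k].
    exact: (@phi_id F K r deg phi psi hg fixV).
  exact: (@psi_id F K r deg phi psi hg fixV heff).
Qed.
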